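(* Let $n\ge2$, $A\in\mathbb{R}^{n\times m}$, $B\in\mathbb{R}^{m\times n}$, and let $C$ be a cycle in the DSR$^{[2]}$ graph $G^{[2]}_{A,B}$. Then $C$ is direct if it has an even number of inversions, and twisted otherwise.
   Context: DSR graphs: for $A\in\mathbb{R}^{n\times m}$, $B\in\mathbb{R}^{m\times n}$, $G_{A,B}$ is the signed bipartite digraph with S-vertices $S_1,\dots,S_n$ and R-vertices $R_1,\dots,R_m$, an arc $R_j\to S_i$ of sign $\mathrm{sign}(A_{ij})$ iff $A_{ij}\ne0$, an arc $S_i\to R_j$ of sign $\mathrm{sign}(B_{ji})$ iff $B_{ji}\ne0$, with antiparallel arcs of equal sign merged into an undirected edge. Walks traverse edges consistently with orientation; a cycle is a nonempty closed walk with no repeated vertex except first$=$last. DSR$^{[2]}$ graph: $\overline{\mathbf L}^A\in\mathbb{R}^{\binom n2\times mn}$ has rows indexed by $(i,j)$, $i<j$, columns by $(k,l)$, $1\le k\le m$, $1\le l\le n$, with entries $A_{jk}$ if $l=i$, $-A_{ik}$ if $l=j$, $0$ otherwise; $\underline{\mathbf L}^B\in\mathbb{R}^{mn\times\binom n2}$ has $(k,l),(i,j)$ entry $B_{kj}$ if $l=i$, $-B_{ki}$ if $l=j$, $0$ otherwise. $G^{[2]}_{A,B}:=G_{\overline{\mathbf L}^A,\underline{\mathbf L}^B}$, with S-vertices written $ij=ji$ and R-vertices $k^l$; an edge $(ij,k^l)$ exists only if $l\in\{i,j\}$. The projection $\pi$ sends an edge $(ij,k^j)$ of $G^{[2]}_{A,B}$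 to the edge $(S_i,R_k)$ of $G_{A,B}$. Direct/twisted: let $C$ be a cycle of $G^{[2]}_{A,B}$ with S-vertex sequence $a_1b_1,a_2b_2,\dots,a_{T+1}b_{T+1}=a_1b_1$, and write the segment of $C$ from $a_rb_r$ to $a_{r+1}b_{r+1}$ as $(a_rb_r,k^l,a_{r+1}b_{r+1})$ with $l$ the common index; its projection is a length-2 walk in $G_{A,B}$ from $S_x$ to $S_y$, where $x$ is the element of $\{a_r,b_r\}$ other than $l$ and $y$ the element of $\{a_{r+1},b_{r+1}\}$ other than $l$. Starting from the two empty walks at $S_{a_1}$ and $S_{b_1}$, for $r=1,\dots,T$ append this projected segment to whichever of the two current walks ends at $S_x$ (the two current walks always end at the two distinct vertices $S_{a_r},S_{b_r}$). The resulting walks $W',W''$ are either both closed, in which case $C$ is called direct, or one goes from $S_{a_1}$ to $S_{b_1}$ and the other back, in which case $C$ is called twisted. Inversions: two consecutive S-vertices of $C$ (including the last and first) are distinct and share exactly one index; writing them as $ij$ and $ij'$ with common index $i$, the pair is an inversion if $(i-j)(i-j')<0$. *)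

(* Defs.v *)
From HB Require Import structures.
From mathcomp Require Import all_boot all_order all_algebra.
From mathcomp Require Import reals.
Set Implicit Arguments. Unset Strict Implicit. Unset Printing Implicit Defensive.
Import Order.TTheory GRing.Theory Num.Theory.
Local Open Scope ring_scope.

Section DSR.
Variable R : realType.

(* S-vertices are indexed by X, R-vertices by Y; a vertex is [inl s] (S-vertex)
   or [inr r] (R-vertex).  A : X -> Y -> R (entry A_{ij} : arc R_j -> S_i),
   B : Y -> X -> R (entry B_{ji} : arc S_i -> R_j).  Merging antiparallel arcs
   of equal sign into an undirected edge does not change in which directions a
   vertex pair may be traversed, so a walk may go from u to v exactly when
   there is an arc u -> v. *)
Definition dsr_step (X Y : finType) (A : X -> Y -> R) (B : Y -> X -> R) :
    rel (X + Y) :=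
  fun u v => match u, v with
             | inr j, inl i => A i j != 0
             | inl i, inr j => B j i != 0
             | _, _ => false
             end.

Definition dsr_cycle (X Y : finType) (A : X -> Y -> R) (B : Y -> X -> R)
    (c : seq (X + Y)) : bool :=
  [&& c != [::], uniq c & cycle (dsr_step A B) c].

(* Unordered pairs ij = ji of distinct indices, stored as (i,j) with i < j. *)
Definition pair2 (n : nat) := {p : 'I_n * 'I_n | (p.1 < p.2)%N}.
Definition pfst n (p : pair2 n) : 'I_n := (val p).1.
Definition psnd n (p : pair2 n) : 'I_n := (val p).2.
Definition pmem n (p : pair2 n) (l : 'I_n) : bool := (l == pfst p) || (l == psnd p).
(* the element of p other than l (meaningful when l belongs to p) *)
Definition pother n (p : pair2 n) (l : 'I_n) : 'I_n :=
  if l == pfst p then psnd p else pfst p.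

(* \overline{L}^A : rows (i,j), i<j; columns (k,l). *)
Definition LA n m (A : 'M[R]_(n, m)) : pair2 n -> ('I_m * 'I_n) -> R :=
  fun p kl => if kl.2 == pfst p then A (psnd p) kl.1
              else if kl.2 == psnd p then - A (pfst p) kl.1 else 0.
(* \underline{L}^B : rows (k,l); columns (i,j), i<j. *)
Definition LB n m (B : 'M[R]_(m, n)) : ('I_m * 'I_n) -> pair2 n -> R :=
  fun kl p => if kl.2 == pfst p then B kl.1 (psnd p)
              else if kl.2 == psnd p then - B kl.1 (pfst p) else 0.

Definition vert2 n m := (pair2 n + ('I_m * 'I_n))%type.

Definition dsr2_cycle n m (A : 'M[R]_(n, m)) (B : 'M[R]_(m, n))
    (c : seq (vert2 n m)) : bool :=
  dsr_cycle (LA A) (LB B) c.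

Definition getS n m (v : vert2 n m) : option (pair2 n) :=
  if v is inl s then Some s else None.
Definition getR n m (v : vert2 n m) : option ('I_m * 'I_n) :=
  if v is inr r then Some r else None.
Definition isS n m (v : vert2 n m) : bool := if v is inl _ then true else false.

(* the cycle rotated so as to start at its first S-vertex:
   [:: a_1b_1; r_1; a_2b_2; r_2; ...; a_Tb_T; r_T] *)
Definition cyc_fromS n m (c : seq (vert2 n m)) := rot (find (@isS n m) c) c.
Definition Sseq n m (c : seq (vert2 n m)) := pmap (@getS n m) (cyc_fromS c).
(* R-vertex sequence r_1, ..., r_T (r_t lies between a_tb_t and a_{t+1}b_{t+1}) *)
Definition Rseq n m (c : seq (vert2 n m)) := pmap (@getR n m) (cyc_fromS c).
(* segments (a_rb_r, k^l, a_{r+1}b_{r+1}), r = 1..T, with a_{T+1}b_{T+1} = a_1b_1 *)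
Definition segments n m (c : seq (vert2 n m)) :=
  zip (Sseq c) (zip (Rseq c) (rot 1 (Sseq c))).

(* vertices of G_{A,B}: S_i = inl i, R_k = inr k *)
Definition vert1 n m := ('I_n + 'I_m)%type.
(* a walk in G_{A,B}: its start vertex and the subsequent vertices *)
Definition walk n m := (vert1 n m * seq (vert1 n m))%type.
Definition wstart n m (w : walk n m) := w.1.
Definition wend n m (w : walk n m) := last w.1 w.2.

(* append the projection (S_x, R_k, S_y) of the segment (s, k^l, s') to the
   current walk ending at S_x, where x = other(s,l), y = other(s',l) *)
Definition proj_step n m (st : walk n m * walk n m)
    (sg : pair2 n * (('I_m * 'I_n) * pair2 n)) : walk n m * walk n m :=
  let: (s, (kl, s')) := sg in
  let x := pother s kl.2 in
  let y := pother s' kl.2 in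
  let ext := [:: inr kl.1; inl y] in
  if wend st.1 == inl x then ((st.1.1, st.1.2 ++ ext), st.2)
  else if wend st.2 == inl x then (st.1, (st.2.1, st.2.2 ++ ext))
  else st.

(* the pair of walks (W', W'') obtained from the cycle, W' starting at S_{a_1}
   and W'' at S_{b_1} *)
Definition proj_walks n m (c : seq (vert2 n m)) : option (walk n m * walk n m) :=
  if Sseq c is s1 :: _ then
    Some (foldl (@proj_step n m)
                ((inl (pfst s1), [::]), (inl (psnd s1), [::])) (segments c))
  else None.

Definition direct n m (c : seq (vert2 n m)) : bool :=
  if proj_walks c is Some (w1, w2) then
    (wend w1 == wstart w1) && (wend w2 == wstart w2)
  else false.

Definition twisted n m (c : seq (vert2 n m)) : bool :=
  if proj_walks c is Some (w1, w2) then
    [&& wend w1 == wstart w2 & wend w2 == wstart w1]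
  else false.

Definition inversion n (p q : pair2 n) : bool :=
  [exists i : 'I_n, exists j : 'I_n, exists j' : 'I_n,
     [&& i != j, i != j', j != j', pmem p i, pmem p j, pmem q i, pmem q j' &
         ((i%:Z - j%:Z) * (i%:Z - j'%:Z) < 0)%R]].

Definition num_inversions n m (c : seq (vert2 n m)) : nat :=
  count (fun pq => inversion pq.1 pq.2) (zip (Sseq c) (rot 1 (Sseq c))).

End DSR.

(* Main.v *)
Require Import Defs.
From HB Require Import structures.
From mathcomp Require Import all_boot all_order all_algebra.
From mathcomp Require Import reals.
Set Implicit Arguments. Unset Strict Implicit. Unset Printing Implicit Defensive.
Import Order.TTheory GRing.Theory Num.Theory.
Local Open Scope ring_scope.

Section Pairs.
Variable n : nat.
Implicit Types p q : pair2 n.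

Lemma pfst_lt p : (pfst p < psnd p)%N.
Proof. exact: (valP p). Qed.

Lemma pfst_psnd p : (pfst p == psnd p) = false.
Proof. by apply/negbTE/eqP => h; have := pfst_lt p; rewrite h ltnn. Qed.

Lemma psnd_pfst p : (psnd p == pfst p) = false.
Proof. by rewrite eq_sym pfst_psnd. Qed.

Lemma pmem_cases p l : pmem p l ->
  (l = pfst p /\ pother p l = psnd p /\ (l == pfst p) = true) \/
  (l = psnd p /\ pother p l = pfst p /\ (l == pfst p) = false).
Proof.
rewrite /pmem /pother => /orP[]/eqP ->; first by left; rewrite eqxx.
by right; rewrite psnd_pfst.
Qed.

Lemma pmem_other p l : pmem p l -> pmem p (pother p l) /\ pother p l != l.
Proof.
case/pmem_cases=> [[-> [-> _]]|[-> [-> _]]]; rewrite /pmem eqxx ?orbT;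
by rewrite ?pfst_psnd ?psnd_pfst.
Qed.

Lemma pmem3 p a b c : pmem p a -> pmem p b -> pmem p c -> a != b -> c = a \/ c = b.
Proof.
rewrite /pmem => /orP[]/eqP-> /orP[]/eqP-> /orP[]/eqP->; rewrite ?eqxx //;
by auto.
Qed.

Lemma other_uniq p l j : pmem p l -> pmem p j -> j != l -> j = pother p l.
Proof.
move=> hl hj hjl; have [ho hol] := pmem_other hl.
have hlo : l != pother p l by rewrite eq_sym.
case: (pmem3 hl ho hj hlo) => [e|->//].
by rewrite e eqxx in hjl.
Qed.

Lemma lt_other p l : pmem p l -> (l < pother p l)%N = (l == pfst p).
Proof.
case/pmem_cases=> [[-> [-> ->]]|[-> [-> ->]]]; first exact: pfst_lt.
by rewrite ltnNge ltnW // pfst_lt.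
Qed.

Lemma inv_char p q l : pmem p l -> pmem q l ->
  inversion p q = (l == pfst p) (+) (l == pfst q).
Proof.
move=> hp hq.
have [hop hpo] := pmem_other hp; have [hoq hqo] := pmem_other hq.
have key : forall x y : 'I_n, x != l -> y != l ->
   ((l%:Z - x%:Z) * (l%:Z - y%:Z) < 0)%R = (l < x)%N (+) (l < y)%N.
  move=> x y hx hy.
  rewrite neq0_mulr_lt0 ?subr_lt0 ?ltz_nat // subr_eq0 eqz_nat eq_sym //.
apply/idP/idP.
- case/existsP=> i /existsP[j /existsP[j' /and5P[hij hij' hjj' hpi /and4P[hpj hqi hqj' hlt]]]].
  have eil : i = l.
    apply/eqP/negPn/negP => hil.
    case: (pmem3 hpi hp hpj hil) => ej; first by rewrite ej eqxx in hij.
    case: (pmem3 hqi hq hqj' hil) => ej'; first by rewrite ej' eqxx in hij'.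
    by rewrite ej ej' eqxx in hjj'.
  subst i.
  have ej : j = pother p l by apply: other_uniq; rewrite // eq_sym.
  have ej' : j' = pother q l by apply: other_uniq; rewrite // eq_sym.
  by move: hlt; rewrite key ?ej ?ej' ?lt_other // eq_sym.
- move=> hx; apply/existsP; exists l; apply/existsP; exists (pother p l).
  apply/existsP; exists (pother q l).
  have hlt : ((l%:Z - (pother p l)%:Z) * (l%:Z - (pother q l)%:Z) < 0)%R.
    by rewrite key // !lt_other.
  rewrite hp hq hop hoq hlt !(eq_sym l) hpo hqo /= andbT.
  apply/eqP=> e; move: hlt; rewrite e -expr2 ltNge sqr_ge0 //.
Qed.
End Pairs.

Section Fold.
Variables n m : nat.

Definition orient (st : walk n m * walk n m) (p : pair2 n) (b : bool) :=
  if b then (wend st.1 = inl (pfst p)) /\ (wend st.2 = inl (psnd p))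
  else (wend st.1 = inl (psnd p)) /\ (wend st.2 = inl (pfst p)).

Lemma inl_eqE (a b : 'I_n) : (@inl 'I_n 'I_m a == inl b) = (a == b).
Proof. by []. Qed.

Lemma step_ok st p k l q b : pmem p l -> pmem q l -> orient st p b ->
  let st' := proj_step st (p, ((k, l), q)) in
  orient st' q (b (+) inversion p q) /\ st'.1.1 = st.1.1 /\ st'.2.1 = st.2.1.
Proof.
move=> hp hq; rewrite (inv_char hp hq) /orient /proj_step /=.
case/pmem_cases: hp => [[el [-> ->]]|[el [-> ->]]];
case/pmem_cases: hq => [[el' [-> ->]]|[el' [-> ->]]];
case: b => -[h1 h2]; rewrite h1 h2 !inl_eqE ?eqxx ?pfst_psnd ?psnd_pfst /= ?h1 ?h2;
rewrite /wend /= ?last_cat /=; do ! split; congruence.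
Qed.

Fixpoint good (p : pair2 n) (segs : seq (pair2 n * (('I_m * 'I_n) * pair2 n))) : Prop :=
  match segs with
  | [::] => True
  | (p', (kl, q)) :: rest => p' = p /\ pmem p kl.2 /\ pmem q kl.2 /\ good q rest
  end.

Lemma fold_ok segs : forall p st b, good p segs -> orient st p b ->
  let st' := foldl (@proj_step n m) st segs in
  orient st' (last p (map (fun s => s.2.2) segs))
     (b (+) odd (count (fun s => inversion s.1 s.2.2) segs)) /\
  st'.1.1 = st.1.1 /\ st'.2.1 = st.2.1.
Proof.
elim: segs => [|[p' [[k l] q]] rest IH] p st b.
  by move=> _ h; rewrite /= addbF.
case=> -> [hp [hq hg]] ho.
have [ho' [e1 e2]] := step_ok k hp hq ho.
change (foldl (@proj_step n m) st ((p,((k,l),q))::rest)) with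
  (foldl (@proj_step n m) (proj_step st (p,((k,l),q))) rest).
move: (proj_step st _) ho' e1 e2 => st1 ho' e1 e2.
have := IH _ _ _ hg ho'; rewrite /= oddD oddb addbA.
move=> [h1 [h2 h3]]; split => //; split; congruence.
Qed.
End Fold.

Section Struct.
Variables (R : realType) (n m : nat) (A : 'M[R]_(n, m)) (B : 'M[R]_(m, n)).
Local Notation e := (dsr_step (LA A) (LB B)).

Lemma edge_SR p kl : e (inl p) (inr kl) -> pmem p kl.2.
Proof.
rewrite /= /LB /pmem; case: (kl.2 == pfst p) => //; case: (kl.2 == psnd p) => //.
by rewrite eqxx.
Qed.

Lemma edge_RS p kl : e (inr kl) (inl p) -> pmem p kl.2.
Proof.
rewrite /= /LA /pmem; case: (kl.2 == pfst p) => //; case: (kl.2 == psnd p) => //.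
by rewrite eqxx.
Qed.

Definition segsOf (s : pair2 n) (rest : seq (vert2 n m)) se :=
  zip (s :: pmap (@getS n m) rest)
      (zip (pmap (@getR n m) rest) (rcons (pmap (@getS n m) rest) se)).

Lemma struct N : forall rest s se, (size rest <= N)%N ->
  path e (inl s) rest -> e (last (inl s) rest) (inl se) ->
  good s (segsOf s rest se) /\
  last s (map (fun x => x.2.2) (segsOf s rest se)) = se /\
  map (fun x => (x.1, x.2.2)) (segsOf s rest se) =
    zip (s :: pmap (@getS n m) rest) (rcons (pmap (@getS n m) rest) se).
Proof.
elim: N => [|N IH] [|v rest] s se //=.
case: v => [s'|r] //=.
case: rest => [|[s'|r'] rest2] /=.
  by move=> _ /andP[h1 _] h2; rewrite /segsOf /=; do !split => //;
     [exact: (edge_SR h1) | exact: (edge_RS h2)].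
  move=> hs /andP[h1 /andP[h2 hp]] hl.
  have [hg [hla hm]] := IH rest2 s' se (ltnW hs) hp hl.
  rewrite /segsOf /= in hg hla hm *.
  by rewrite hla hm; do !split => //; [exact: (edge_SR h1) | exact: (edge_RS h2)].
by rewrite andbF.
Qed.
End Struct.

Theorem proposition5p2 (R : realType) (n m : nat) (hn : (2 <= n)%N)
    (A : 'M[R]_(n, m)) (B : 'M[R]_(m, n)) (C : seq (vert2 n m)) :
  dsr2_cycle A B C ->
  (~~ odd (num_inversions C) -> direct C) /\
  (odd (num_inversions C) -> twisted C).
Proof.
rewrite /dsr2_cycle /dsr_cycle => /and3P[hne _ hcyc].
case: C hne hcyc => [//|v t] _ hcyc.
have hhas : has (@isS n m) (v :: t).
  case: v hcyc => [//|r]; case: t => [|w t] /=; first by [].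
  by case: w => //= ? _; rewrite orTb.
set C := v :: t in hcyc hhas *.
have hi : (find (@isS n m) C < size C)%N by rewrite -has_find.
have hnth := nth_find v hhas.
have hrot : cyc_fromS C = nth v C (find (@isS n m) C) ::
     (drop (find (@isS n m) C).+1 C ++ take (find (@isS n m) C) C).
  by rewrite /cyc_fromS /rot (drop_nth v hi).
move: hnth hrot; case E: (nth v C _) => [s1|r] // _ hrot.
move: (drop _ _ ++ _) hrot => rest hrot.
have hc' : cycle (dsr_step (LA A) (LB B)) (inl s1 :: rest).
  by rewrite -hrot /cyc_fromS rot_cycle.
move: hc'; rewrite /= rcons_path => /andP [hpath hlast].
have [hg [hl hm]] := struct (leqnn _) hpath hlast.
have hS : Sseq C = s1 :: pmap (@getS n m) rest by rewrite /Sseq hrot.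
have hRs : Rseq C = pmap (@getR n m) rest by rewrite /Rseq hrot.
have hseg : segments C = segsOf s1 rest s1.
  by rewrite /segments hS hRs rot1_cons.
have hinv : num_inversions C =
    count (fun s => inversion s.1 s.2.2) (segsOf s1 rest s1).
  by rewrite /num_inversions hS rot1_cons -hm count_map.
have init : @orient n m ((inl (pfst s1), [::]), (inl (psnd s1), [::])) s1 true by [].
have [ho [e1 e2]] := fold_ok hg init.
rewrite hl in ho.
rewrite /direct /twisted /proj_walks hS hseg hinv.
move: (foldl _ _ _) ho e1 e2 => [w1 w2].
rewrite /orient /wstart /=.
case: odd => /= -[h1 h2] e1 e2; rewrite h1 h2 e1 e2 !eqxx; by split.
Qed.
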